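(* Let $\theta\mapsto\mathcal E_\theta$ be a differentiable family of unital quantum channels on $d\times d$ matrices with Kraus operators $\{K_i^\theta\}$ and Liouville representation $T_\theta=\sum_iK_i^\theta\otimes K_i^{\theta*}$, and let $\theta_0$ be a parameter value. Denote by $P$ the projection onto the subspace $\mathcal P$ spanned by the eigenvectors of $T_\theta^\dagger T_\theta$ with eigenvalue $1$. Suppose that at $\theta=\theta_0$: (i) $PT_\theta^\dagger\dot T_\theta P\neq0$ and $PT_\theta^\dagger\dot T_\theta P$ is a normal operator; and (ii) there exist a unitary $U_c$ and a matrix $R_0$ with $|R_0\rangle\rangle$ an eigenvector of $PT_\theta^\dagger\dot T_\theta P$ associated with a nonzero eigenvalue, such that $$U_c^\dagger R_0U_c=\sum_kK_k^{\theta_0}R_0K_k^{\theta_0\dagger}.$$ Then the sequential QFI of $N$ channels can achieve the Heisenberg limit by applying the same unitary control $U_c$ after each channel: there exists an input state $\rho_0$ (independent of $N$) such that, with $\rho_\theta^{(N)}=(\mathcal U_c\circ\mathcal E_\theta)^N(\rho_0)$ where $\mathcal U_c(\rho)=U_c\rho U_c^\dagger$, one has $\liminf_{N\to\infty}F^Q(\rho_\theta^{(N)})|_{\theta=\theta_0}/N^2>0$.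
   Context: Unital means $\mathcal E_\theta(I)=I$ (channels are trace preserving). For a $d\times d$ matrix $A$, $|A\rangle\rangle=(A_{11},A_{12},\dots,A_{dd})^T$ is its vectorization and $\langle\langle A|B\rangle\rangle=\operatorname{Tr}(A^\dagger B)$; then $T_\theta|\rho\rangle\rangle=|\mathcal E_\theta(\rho)\rangle\rangle$, and the controlled channel $\mathcal U_c\circ\mathcal E_\theta$ has Liouville representation $(U_c\otimes U_c^* )T_\theta$. $T_\theta^\dagger$ is the conjugate transpose of the $d^2\times d^2$ matrix $T_\theta$, and $\dot T_\theta=dT_\theta/d\theta$; $P$ and $PT_\theta^\dagger\dot T_\theta P$ are evaluated at $\theta=\theta_0$. $F^Q(\rho_\theta)=\operatorname{Tr}(\rho_\theta L_{\rho_\theta}^2)$ is the quantum Fisher information with symmetric logarithmic derivative defined by $2\dot\rho_\theta=\rho_\theta L_{\rho_\theta}+L_{\rho_\theta}\rho_\theta$. No ancilla is used. *)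

(* Defs.v *)
From HB Require Import structures.
From mathcomp Require Import all_boot all_order all_algebra.
From mathcomp Require Import all_classical all_reals.
From mathcomp Require Import topology normedtype derive.
From mathcomp Require Import complex mxtens.

Set Implicit Arguments.
Unset Strict Implicit.
Unset Printing Implicit Defensive.

Import Order.TTheory GRing.Theory Num.Theory.
Import numFieldNormedType.Exports.
Local Open Scope ring_scope.

Definition adj (R : rcfType) (m n : nat) (A : 'M[R[i]]_(m, n)) : 'M[R[i]]_(n, m) :=
  (map_mx (@conjc R) A)^T.

(* row-major vectorization |A>> = (A_11, A_12, ..., A_dd)^T, with the index
   convention of the Kronecker product [tensmx] (index (i,j) |-> i*d + j) *)
Definition vecm (R : rcfType) (d : nat) (A : 'M[R[i]]_d) : 'cV[R[i]]_(d * d) :=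
  \col_k A (mxtens_unindex k).1 (mxtens_unindex k).2.

Definition channel (R : rcfType) (d r : nat) (K : 'I_r -> 'M[R[i]]_d)
  (rho : 'M[R[i]]_d) : 'M[R[i]]_d :=
  \sum_(i < r) (K i *m rho *m adj (K i)).

Definition liouville (R : rcfType) (d r : nat) (K : 'I_r -> 'M[R[i]]_d)
  : 'M[R[i]]_(d * d) :=
  \sum_(i < r) (K i *t map_mx (@conjc R) (K i)).

Definition unitary (R : rcfType) (d : nat) (U : 'M[R[i]]_d) : Prop :=
  adj U *m U = 1%:M /\ U *m adj U = 1%:M.

Definition density (R : rcfType) (d : nat) (rho : 'M[R[i]]_d) : Prop :=
  (forall v : 'cV[R[i]]_d, 0 <= (adj v *m rho *m v) 0 0) /\ \tr rho = 1.

Definition mx_derivable (R : realType) (m n : nat) (F : R -> 'M[R[i]]_(m, n))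
  (t : R) : Prop :=
  forall i j, derivable (fun s : R => complex.Re (F s i j)) t 1 /\
              derivable (fun s : R => complex.Im (F s i j)) t 1.

Definition mderive (R : realType) (m n : nat) (F : R -> 'M[R[i]]_(m, n))
  (t : R) : 'M[R[i]]_(m, n) :=
  \matrix_(i, j) Complex (derive1 (fun s : R => complex.Re (F s i j)) t)
                         (derive1 (fun s : R => complex.Im (F s i j)) t).

Definition is_SLD (R : rcfType) (d : nat) (rho drho L : 'M[R[i]]_d) : Prop :=
  adj L = L /\ 2%:R *: drho = rho *m L + L *m rho.

(* quantum Fisher information Tr(rho L^2); this value does not depend on the
   choice of the SLD L (and an SLD exists for differentiable families of states) *)
Definition QFI (R : realType) (d : nat) (rho drho : 'M[R[i]]_d) : R :=
  xget 0 [set q : R | exists L, is_SLD rho drho L /\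
                        Complex q 0 = \tr (rho *m L *m L)].

Definition seq_state (R : realType) (d r : nat) (K : R -> 'I_r -> 'M[R[i]]_d)
  (Uc rho0 : 'M[R[i]]_d) (N : nat) (theta : R) : 'M[R[i]]_d :=
  iter N (fun rho => Uc *m channel (K theta) rho *m adj Uc) rho0.

(* Main.v *)
Require Import Defs.
From HB Require Import structures.
From mathcomp Require Import all_boot all_order all_algebra.
From mathcomp Require Import all_classical all_reals.
From mathcomp Require Import topology normedtype derive.
From mathcomp Require Import complex mxtens.
Import Order.TTheory GRing.Theory Num.Theory.
Import numFieldNormedType.Exports.
Local Open Scope ring_scope.
From mathcomp Require Import ring.
Local Open Scope ring_scope.
Section CDer.
Set Implicit Arguments. Unset Strict Implicit.
Variable R : realType.
Implicit Types (f g : R -> R[i]) (t : R).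

Lemma ReD (x y : R[i]) : complex.Re (x + y) = complex.Re x + complex.Re y.
Proof. by case: x; case: y. Qed.
Lemma ImD (x y : R[i]) : complex.Im (x + y) = complex.Im x + complex.Im y.
Proof. by case: x; case: y. Qed.
Lemma ReN (x : R[i]) : complex.Re (- x) = - complex.Re x.
Proof. by case: x. Qed.
Lemma ImN (x : R[i]) : complex.Im (- x) = - complex.Im x.
Proof. by case: x. Qed.
Lemma ReM (x y : R[i]) : complex.Re (x * y) = complex.Re x * complex.Re y - complex.Im x * complex.Im y.
Proof. by case: x; case: y. Qed.
Lemma ImM (x y : R[i]) : complex.Im (x * y) = complex.Re x * complex.Im y + complex.Im x * complex.Re y.
Proof. by case: x; case: y. Qed.
Lemma ReJ (x : R[i]) : complex.Re (conjc x) = complex.Re x.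
Proof. by case: x. Qed.
Lemma ImJ (x : R[i]) : complex.Im (conjc x) = - complex.Im x.
Proof. by case: x. Qed.

Definition cdr f t (df : R[i]) :=
  is_derive t 1 (fun s => complex.Re (f s)) (complex.Re df) /\
  is_derive t 1 (fun s => complex.Im (f s)) (complex.Im df).

Lemma is_derive_ext (h1 h2 : R -> R) t (dh1 dh2 : R) :
  (forall s, h1 s = h2 s) -> dh1 = dh2 -> is_derive t 1 h1 dh1 -> is_derive t 1 h2 dh2.
Proof. by move=> /funext <- <-. Qed.

Lemma cdr_ext f g t a b : (forall s, f s = g s) -> a = b -> cdr f t a -> cdr g t b.
Proof. by move=> /funext <- <-. Qed.

Lemma cdr_cst t (c : R[i]) : cdr (fun _ => c) t 0.
Proof. by split; apply: is_derive_cst. Qed.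

Lemma cdr_add f g t a b : cdr f t a -> cdr g t b -> cdr (fun s => f s + g s) t (a + b).
Proof.
move=> [fr fi] [gr gi]; split.
  apply: is_derive_ext (is_deriveD fr gr).
    by move=> s; rewrite ReD.
  by rewrite ReD.
apply: is_derive_ext (is_deriveD fi gi).
  by move=> s; rewrite ImD.
by rewrite ImD.
Qed.

Lemma cdr_opp f t a : cdr f t a -> cdr (fun s => - f s) t (- a).
Proof.
move=> [fr fi]; split.
  apply: is_derive_ext (is_deriveN fr); first by move=> s; rewrite ReN.
  by rewrite ReN.
apply: is_derive_ext (is_deriveN fi); first by move=> s; rewrite ImN.
by rewrite ImN.
Qed.

Lemma cdr_mul f g t a b : cdr f t a -> cdr g t b ->
  cdr (fun s => f s * g s) t (a * g t + f t * b).
Proof.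
move=> [fr fi] [gr gi]; split.
  apply: is_derive_ext (is_deriveB (is_deriveM fr gr) (is_deriveM fi gi)).
    by move=> s; rewrite ReM.
  rewrite ReD !ReM; rewrite /GRing.scale /=; ring.
apply: is_derive_ext (is_deriveD (is_deriveM fr gi) (is_deriveM fi gr)).
  by move=> s; rewrite ImM.
rewrite ImD !ImM; rewrite /GRing.scale /=; ring.
Qed.

Lemma cdr_conj f t a : cdr f t a -> cdr (fun s => conjc (f s)) t (conjc a).
Proof.
move=> [fr fi]; split.
  apply: is_derive_ext fr; first by move=> s; rewrite ReJ.
  by rewrite ReJ.
apply: is_derive_ext (is_deriveN fi); first by move=> s; rewrite ImJ.
by rewrite ImJ.
Qed.

Lemma cdr_sum n (F : 'I_n -> R -> R[i]) t (dF : 'I_n -> R[i]) :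
  (forall k, cdr (F k) t (dF k)) -> cdr (fun s => \sum_(k < n) F k s) t (\sum_(k < n) dF k).
Proof.
elim: n F dF => [|n IH] F dF H.
  apply: cdr_ext (cdr_cst t 0); [move=> s|]; by rewrite big_ord0.
apply: cdr_ext (cdr_add (IH _ _ (fun k => H (widen_ord (leqnSn n) k))) (H ord_max)).
  by move=> s; rewrite [RHS]big_ord_recr.
by rewrite [RHS]big_ord_recr.
Qed.

Lemma cdr_uniq f t a b : cdr f t a -> cdr f t b -> a = b.
Proof.
move=> [[_ ar] [_ ai]] [[_ br] [_ bi]].
by case: a ar ai => ? ? /= <- <-; case: b br bi => ? ? /= <- <-.
Qed.

Definition mdr m n (F : R -> 'M[R[i]]_(m, n)) t (dF : 'M[R[i]]_(m, n)) :=
  forall i j, cdr (fun s => F s i j) t (dF i j).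

Lemma mdr_mderive m n (F : R -> 'M[R[i]]_(m, n)) t dF : mdr F t dF -> mderive F t = dF.
Proof.
move=> H; apply/matrixP => i j; rewrite mxE.
case: (H i j) => [[_ ar] [_ ai]].
by rewrite !derive1E ar ai; case: (dF i j).
Qed.

Lemma mdr_derivable m n (F : R -> 'M[R[i]]_(m, n)) t :
  mx_derivable F t -> mdr F t (mderive F t).
Proof.
move=> H i j; case: (H i j) => hr hi; rewrite mxE; split => /=;
by rewrite derive1E; apply: derivableP.
Qed.

Lemma mdr_uniq m n (F : R -> 'M[R[i]]_(m, n)) t A B : mdr F t A -> mdr F t B -> A = B.
Proof. by move=> HA HB; apply/matrixP => i j; exact: cdr_uniq (HA i j) (HB i j). Qed.

Lemma mdr_ext m n (F G : R -> 'M[R[i]]_(m, n)) t A B :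
  (forall s, F s = G s) -> A = B -> mdr F t A -> mdr G t B.
Proof. by move=> /funext <- <-. Qed.

Lemma mdr_cst m n t (C : 'M[R[i]]_(m, n)) : mdr (fun _ => C) t 0.
Proof. move=> i j; rewrite mxE; exact: cdr_cst. Qed.

Lemma mdr_add m n (F G : R -> 'M[R[i]]_(m, n)) t A B :
  mdr F t A -> mdr G t B -> mdr (fun s => F s + G s) t (A + B).
Proof. move=> HF HG i j; rewrite mxE; apply: cdr_ext (cdr_add (HF i j) (HG i j)) => //.
by move=> s; rewrite mxE. Qed.

Lemma mdr_sum m n r (F : 'I_r -> R -> 'M[R[i]]_(m, n)) t (A : 'I_r -> 'M[R[i]]_(m, n)) :
  (forall k, mdr (F k) t (A k)) -> mdr (fun s => \sum_(k < r) F k s) t (\sum_(k < r) A k).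
Proof.
move=> H i j; rewrite summxE.
apply: cdr_ext (@cdr_sum _ (fun k s => F k s i j) t (fun k => A k i j) (fun k => H k i j)) => //.
by move=> s; rewrite summxE.
Qed.

Lemma mdr_mul m n p (F : R -> 'M[R[i]]_(m, n)) (G : R -> 'M[R[i]]_(n, p)) t A B :
  mdr F t A -> mdr G t B -> mdr (fun s => F s *m G s) t (A *m G t + F t *m B).
Proof.
move=> HF HG i j; rewrite !mxE -big_split /=.
apply: cdr_ext (@cdr_sum _ (fun k s => F s i k * G s k j) t (fun k => A i k * G t k j + F t i k * B k j) (fun k => cdr_mul (HF i k) (HG k j))) => //.
by move=> s; rewrite mxE.
Qed.

Lemma mdr_adj m n (F : R -> 'M[R[i]]_(m, n)) t A :
  mdr F t A -> mdr (fun s => adj (F s)) t (adj A).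
Proof.
move=> H i j; rewrite !mxE.
by apply: cdr_ext (cdr_conj (H j i)) => // s; rewrite !mxE.
Qed.

Lemma mdr_conj m n (F : R -> 'M[R[i]]_(m, n)) t A :
  mdr F t A -> mdr (fun s => map_mx (@conjc R) (F s)) t (map_mx (@conjc R) A).
Proof.
move=> H i j; rewrite !mxE.
by apply: cdr_ext (cdr_conj (H i j)) => // s; rewrite !mxE.
Qed.

Lemma mdr_tens m n p q (F : R -> 'M[R[i]]_(m, n)) (G : R -> 'M[R[i]]_(p, q)) t A B :
  mdr F t A -> mdr G t B -> mdr (fun s => F s *t G s) t (A *t G t + F t *t B).
Proof.
move=> HF HG i j; rewrite !mxE.
by apply: cdr_ext (cdr_mul (HF _ _) (HG _ _)) => // s; rewrite mxE.
Qed.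

Lemma mdr_vec d (F : R -> 'M[R[i]]_d) t A :
  mdr F t A -> mdr (fun s => vecm (F s)) t (vecm A).
Proof.
move=> H i j; rewrite !mxE.
by apply: cdr_ext (H _ _) => // s; rewrite mxE.
Qed.

End CDer.
Section VecAlg.
Set Implicit Arguments. Unset Strict Implicit.
Variable R : rcfType.
Local Notation C := (R[i]).

Lemma sum_tens (V : nmodType) m n (F : 'I_(m * n) -> V) :
  \sum_(l < m * n) F l = \sum_(p < m) \sum_(q < n) F (@mxtens_index _ _ (p, q)).
Proof.
rewrite pair_big /=; apply: reindex => /=.
by exists (@mxtens_unindex m n) => l _; rewrite (mxtens_indexK, mxtens_unindexK) //; case: l.
Qed.

Lemma adj_mul m n p (A : 'M[C]_(m, n)) (B : 'M[C]_(n, p)) : adj (A *m B) = adj B *m adj A.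
Proof. by rewrite /adj map_mxM trmx_mul. Qed.
Lemma adjK m n (A : 'M[C]_(m, n)) : adj (adj A) = A.
Proof. by apply/matrixP => i j; rewrite !mxE conjcK. Qed.
Lemma adjD m n (A B : 'M[C]_(m, n)) : adj (A + B) = adj A + adj B.
Proof. by apply/matrixP => i j; rewrite !mxE rmorphD. Qed.
Lemma adjN m n (A : 'M[C]_(m, n)) : adj (- A) = - adj A.
Proof. by apply/matrixP => i j; rewrite !mxE rmorphN. Qed.
Lemma adjB m n (A B : 'M[C]_(m, n)) : adj (A - B) = adj A - adj B.
Proof. by rewrite adjD adjN. Qed.
Lemma adjZ m n (c : C) (A : 'M[C]_(m, n)) : adj (c *: A) = conjc c *: adj A.
Proof. by apply/matrixP => i j; rewrite !mxE rmorphM. Qed.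
Lemma adj_sum m n r (A : 'I_r -> 'M[C]_(m, n)) : adj (\sum_(k < r) A k) = \sum_(k < r) adj (A k).
Proof. by apply/matrixP => i j; rewrite !mxE !summxE rmorph_sum; apply: eq_bigr => k _; rewrite !mxE. Qed.
Lemma adj1 n : adj (1%:M : 'M[C]_n) = 1%:M.
Proof. by apply/matrixP => i j; rewrite !mxE (conjc_nat _ (j == i)) eq_sym. Qed.
Lemma adj0 m n : adj (0 : 'M[C]_(m, n)) = 0.
Proof. by apply/matrixP => i j; rewrite !mxE conjc0. Qed.
Lemma adj_tens m n p q (A : 'M[C]_(m, n)) (B : 'M[C]_(p, q)) : adj (A *t B) = adj A *t adj B.
Proof. by apply/matrixP => i j; rewrite !mxE rmorphM. Qed.

Lemma vecmD d (A B : 'M[C]_d) : vecm (A + B) = vecm A + vecm B.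
Proof. by apply/matrixP => i j; rewrite !mxE. Qed.
Lemma vecmN d (A : 'M[C]_d) : vecm (- A) = - vecm A.
Proof. by apply/matrixP => i j; rewrite !mxE. Qed.
Lemma vecmZ d (c : C) (A : 'M[C]_d) : vecm (c *: A) = c *: vecm A.
Proof. by apply/matrixP => i j; rewrite !mxE. Qed.
Lemma vecm_sum d r (A : 'I_r -> 'M[C]_d) : vecm (\sum_(k < r) A k) = \sum_(k < r) vecm (A k).
Proof. by apply/matrixP => i j; rewrite !mxE !summxE; apply: eq_bigr => k _; rewrite !mxE. Qed.
Lemma vecm_inj d : injective (@vecm R d).
Proof.
move=> A B H; apply/matrixP => i j.
have := congr1 (fun v : 'cV[C]_(d * d) => v (@mxtens_index _ _ (i, j)) 0) H; by rewrite !mxE mxtens_indexK.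
Qed.

Lemma vecAXB d (A X B : 'M[C]_d) : vecm (A *m X *m B) = (A *t B^T) *m vecm X.
Proof.
apply/matrixP => k z; case: (mxtens_indexP k) => i j.
rewrite !mxE mxtens_indexK /= sum_tens.
under eq_bigr do rewrite mxE mulr_suml.
rewrite exchange_big /=; apply: eq_bigr => p _; apply: eq_bigr => q _.
by rewrite tensmxE !mxE !mxtens_indexK /= mulrAC.
Qed.

Lemma vec_tr d (A B : 'M[C]_d) : (adj (vecm A) *m vecm B) 0 0 = \tr (adj A *m B).
Proof.
rewrite mxE sum_tens /mxtrace exchange_big /=; apply: eq_bigr => p _.
rewrite mxE; apply: eq_bigr => q _; by rewrite !mxE mxtens_indexK.
Qed.

Definition chd d r (K : 'I_r -> 'M[C]_d) (X : 'M[C]_d) : 'M[C]_d :=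
  \sum_(i < r) (adj (K i) *m X *m K i).

Lemma trmx_adj m n (A : 'M[C]_(m, n)) : (adj A)^T = map_mx (@conjc R) A.
Proof. by rewrite /adj trmxK. Qed.

Lemma liouville_vec d r (K : 'I_r -> 'M[C]_d) X :
  liouville K *m vecm X = vecm (channel K X).
Proof.
rewrite /liouville /channel mulmx_suml vecm_sum; apply: eq_bigr => k _.
by rewrite vecAXB trmx_adj.
Qed.

Lemma liouville_adj_vec d r (K : 'I_r -> 'M[C]_d) X :
  adj (liouville K) *m vecm X = vecm (chd K X).
Proof.
rewrite /liouville /chd adj_sum mulmx_suml vecm_sum; apply: eq_bigr => k _.
rewrite vecAXB adj_tens; congr (_ *t _ *m _).
by apply/matrixP => i j; rewrite !mxE conjcK.
Qed.

Lemma Uvec d (U X : 'M[C]_d) :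
  (U *t map_mx (@conjc R) U) *m vecm X = vecm (U *m X *m adj U).
Proof. by rewrite vecAXB trmx_adj. Qed.

Lemma adjUvec d (U X : 'M[C]_d) :
  adj (U *t map_mx (@conjc R) U) *m vecm X = vecm (adj U *m X *m U).
Proof.
rewrite vecAXB adj_tens; congr (_ *t _ *m _).
by apply/matrixP => i j; rewrite !mxE conjcK.
Qed.

End VecAlg.
Section PosAlg.
Set Implicit Arguments. Unset Strict Implicit.
Variable R : rcfType.
Local Notation C := (R[i]).

Lemma conjcE (x : C) : conjc x = x^*. Proof. by []. Qed.

Lemma adj_mx m n (A : 'M[C]_(m, n)) i j : adj A i j = (A j i)^*.
Proof. by rewrite !mxE. Qed.

Lemma vnormE n (v : 'cV[C]_n) : (adj v *m v) 0 0 = \sum_i `|v i 0| ^+ 2.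
Proof. rewrite mxE; apply: eq_bigr => i _; by rewrite adj_mx normCKC. Qed.

Lemma vnorm_ge0 n (v : 'cV[C]_n) : 0 <= (adj v *m v) 0 0.
Proof. rewrite vnormE; apply: sumr_ge0 => i _; exact: exprn_ge0. Qed.

Lemma vnorm_eq0 n (v : 'cV[C]_n) : (adj v *m v) 0 0 = 0 -> v = 0.
Proof.
rewrite vnormE => /psumr_eq0P H; apply/matrixP => i j.
rewrite [j]ord1 mxE; apply/eqP; rewrite -normr_eq0 -sqrf_eq0.
by apply/eqP; apply: H => // k _; exact: exprn_ge0.
Qed.

Lemma vnorm_ge_entry n (v : 'cV[C]_n) i : `|v i 0| ^+ 2 <= (adj v *m v) 0 0.
Proof.
rewrite vnormE (bigD1 i) //= lerDl; apply: sumr_ge0 => k _; exact: exprn_ge0.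
Qed.

Lemma conj_tr n (A : 'M[C]_n) : (\tr A)^* = \tr (adj A).
Proof. rewrite /mxtrace rmorph_sum; apply: eq_bigr => i _; by rewrite adj_mx. Qed.

Lemma conj_entry00 (A : 'M[C]_1) : (A 0 0)^* = adj A 0 0.
Proof. by rewrite adj_mx. Qed.

Lemma tr_cols n (M A : 'M[C]_n) :
  \tr (adj M *m A *m M) = \sum_j (adj (col j M) *m A *m col j M) 0 0.
Proof.
rewrite /mxtrace; apply: eq_bigr => j _.
rewrite !mxE; apply: eq_bigr => k _; congr (_ * _); last by rewrite mxE.
rewrite !mxE; apply: eq_bigr => l _; by rewrite !mxE.
Qed.

Lemma trnormE n (M : 'M[C]_n) : \tr (adj M *m M) = \sum_j (adj (col j M) *m col j M) 0 0.
Proof.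
rewrite /mxtrace; apply: eq_bigr => j _; rewrite !mxE; apply: eq_bigr => k _; by rewrite !mxE.
Qed.

Lemma trnorm_ge0 n (M : 'M[C]_n) : 0 <= \tr (adj M *m M).
Proof. rewrite trnormE; apply: sumr_ge0 => j _; exact: vnorm_ge0. Qed.

Lemma trnorm_eq0 n (M : 'M[C]_n) : \tr (adj M *m M) = 0 -> M = 0.
Proof.
rewrite trnormE => /psumr_eq0P H; apply/matrixP => i j.
have := vnorm_eq0 (H (fun k _ => vnorm_ge0 _) j isT).
by move/(congr1 (fun v : 'cV[C]_n => v i 0)); rewrite !mxE.
Qed.

End PosAlg.

Section PD.
Set Implicit Arguments. Unset Strict Implicit.
Variable R : rcfType.
Local Notation C := (R[i]).

Lemma quad_real n (H : 'M[C]_n) (v : 'cV[C]_n) : adj H = H ->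
  (adj v *m H *m v) 0 0 \is Num.real.
Proof.
move=> hH; rewrite CrealE conj_entry00 !adj_mul adjK hH mulmxA; exact/eqP.
Qed.

Lemma pair_le n (v : 'cV[C]_n) i j : `|v i 0| * `|v j 0| <= (adj v *m v) 0 0.
Proof.
have h := real_leif_mean_square_scaled (normr_real (v i 0)) (normr_real (v j 0)).
rewrite -(ler_pMn2r (R := C) (isT : (0 < 2)%N)).
apply: le_trans (h.1) _.
by rewrite mulr2n lerD ?vnorm_ge_entry.
Qed.

Definition Hsum n (H : 'M[C]_n) : C := \sum_i \sum_j `|H i j|.

Lemma Hsum_ge0 n (H : 'M[C]_n) : 0 <= Hsum H.
Proof. by apply: sumr_ge0 => i _; apply: sumr_ge0 => j _. Qed.

Lemma quad_bound n (H : 'M[C]_n) (v : 'cV[C]_n) :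
  `|(adj v *m H *m v) 0 0| <= Hsum H * (adj v *m v) 0 0.
Proof.
rewrite mxE /Hsum mulr_suml.
under [X in _ <= X]eq_bigr do rewrite mulr_suml.
apply: le_trans (ler_norm_sum _ _ _) _.
rewrite [X in _ <= X]exchange_big /=; apply: ler_sum => j _.
rewrite mxE mulr_suml; apply: le_trans (ler_norm_sum _ _ _) _.
apply: ler_sum => i _.
rewrite !normrM adj_mx norm_conjC mulrAC mulrC.
apply: ler_wpM2l => //; exact: pair_le.
Qed.

Definition epsH n (H : 'M[C]_n) : C := (2 * (Hsum H + 1))^-1.

Lemma epsH_gt0 n (H : 'M[C]_n) : 0 < epsH H.
Proof.
rewrite /epsH invr_gt0 mulr_gt0 // ltr_wpDl ?Hsum_ge0 //.
Qed.

Lemma epsH_le n (H : 'M[C]_n) : epsH H * Hsum H <= 2^-1.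
Proof.
have hS := Hsum_ge0 H.
have hpos : 0 < Hsum H + 1 by rewrite ltr_wpDl.
rewrite /epsH invfM -mulrA ler_piMr ?invr_ge0 ?ler0n //.
rewrite ler_pdivrMl // mulr1 lerDl //.
Qed.

Lemma PD_bound n (H : 'M[C]_n) (v : 'cV[C]_n) : adj H = H ->
  (adj v *m v) 0 0 / 2 <= (adj v *m (1%:M + epsH H *: H) *m v) 0 0.
Proof.
move=> hH.
have -> : adj v *m (1%:M + epsH H *: H) *m v = adj v *m v + epsH H *: (adj v *m H *m v).
  by rewrite mulmxDr mulmxDl mulmx1 -scalemxAr -scalemxAl.
have -> : forall (M N : 'M[C]_1) e, (M + e *: N) 0 0 = M 0 0 + e * N 0 0.
  by move=> M N e; rewrite !mxE.
set nv := (adj v *m v) 0 0; set u := (adj v *m H *m v) 0 0.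
have hn : 0 <= nv by exact: vnorm_ge0.
have hu : u \is Num.real by exact: quad_real.
have he := epsH_gt0 H.
have hb : `|epsH H * u| <= nv / 2.
  rewrite normrM (gtr0_norm he).
  apply: le_trans (ler_wpM2l (ltW he) (quad_bound H v)) _.
  rewrite mulrA mulrC; apply: ler_wpM2l => //.
  by rewrite -[2^-1]/(2^-1) epsH_le.
have := real_lerNnormlW (realM (gtr0_real he) hu) hb.
rewrite -(lerD2l nv) => h; apply: le_trans _ h.
by rewrite {2}[nv](splitr nv) addrK.
Qed.

Lemma adj_delta n (i : 'I_n) : adj (delta_mx i 0 : 'cV[C]_n) = delta_mx 0 i.
Proof.
apply/matrixP => a b; rewrite !mxE.
by case: (_ == _); case: (_ == _) => /=; rewrite oppr0.
Qed.

Lemma PDentry n (A : 'M[C]_n) i :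
  (adj (delta_mx i 0 : 'cV[C]_n) *m A *m (delta_mx i 0 : 'cV[C]_n)) 0 0 = A i i.
Proof. by rewrite adj_delta -(rowE i A) -(colE i (row i A)) !mxE. Qed.

Lemma PD_diag n (H : 'M[C]_n) k : adj H = H -> 2^-1 <= (1%:M + epsH H *: H) k k.
Proof.
move=> aH; have := PD_bound (delta_mx k 0 : 'cV[C]_n) aH.
rewrite (PDentry (1%:M + epsH H *: H) k).
have e1 := PDentry (1%:M : 'M[C]_n) k; rewrite mulmx1 in e1.
by rewrite e1 mxE eqxx mul1r.
Qed.

End PD.
Section Sylv.
Set Implicit Arguments. Unset Strict Implicit.
Variable R : rcfType.
Local Notation C := (R[i]).
Variables (n : nat) (rho : 'M[C]_n).

Definition sylv (L : 'M[C]_n) : 'M[C]_n := rho *m L + L *m rho.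

Fact sylv_is_linear : linear sylv.
Proof.
move=> a u v; rewrite /sylv mulmxDr mulmxDl -scalemxAr -scalemxAl.
by rewrite scalerDr addrACA.
Qed.

HB.instance Definition _ := GRing.isLinear.Build C 'M[C]_n 'M[C]_n *:%R sylv sylv_is_linear.

Lemma sylv_surj : (forall L, sylv L = 0 -> L = 0) -> forall Cm, exists L, sylv L = Cm.
Proof.
move=> inj Cm.
set A := lin_mx sylv.
have hA : A \in unitmx.
  rewrite -row_free_unit -kermx_eq0; apply/eqP/row_matrixP => i.
  rewrite row0.
  have h0 : row i (kermx A) *m A = 0 by rewrite -row_mul mulmx_ker row0.
  rewrite -[row i _]vec_mxK mul_vec_lin in h0.
  have h1 : sylv (vec_mx (row i (kermx A))) = 0.
    by have := congr1 vec_mx h0; rewrite mxvecK linear0.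
  by have := congr1 mxvec (inj _ h1); rewrite vec_mxK linear0.
exists (vec_mx (mxvec Cm *m invmx A)).
apply: (can_inj (@mxvecK _ _ _)).
by rewrite -mul_vec_lin vec_mxK mulmxKV.
Qed.

End Sylv.
Section Fisher.
Set Implicit Arguments. Unset Strict Implicit.
Variable R : realType.
Local Notation C := (R[i]).
Variables (n : nat) (rho : 'M[C]_n) (c : C).
Hypothesis rhoH : adj rho = rho.
Hypothesis c_gt0 : 0 < c.
Hypothesis pd : forall v : 'cV[C]_n, c * (adj v *m v) 0 0 <= (adj v *m rho *m v) 0 0.

Lemma trPD (M : 'M[C]_n) : c * \tr (adj M *m M) <= \tr (adj M *m rho *m M).
Proof.
rewrite tr_cols trnormE mulr_sumr; apply: ler_sum => j _; exact: pd.
Qed.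

Lemma trPD_ge0 (M : 'M[C]_n) : 0 <= \tr (adj M *m rho *m M).
Proof. apply: le_trans (trPD M); apply: mulr_ge0; [exact: ltW | exact: trnorm_ge0]. Qed.

Lemma sylv_inj (L : 'M[C]_n) : sylv rho L = 0 -> L = 0.
Proof.
move=> h.
have e : \tr (adj L *m rho *m L) + \tr (adj (adj L) *m rho *m adj L) = 0.
  have := congr1 (fun M => \tr (adj L *m M)) h; rewrite /sylv /= mulmx0 mxtrace0.
  rewrite mulmxDr linearD /= adjK !mulmxA; move=> <-; congr (_ + _).
  by rewrite -[in RHS]mulmxA [in RHS]mxtrace_mulC.
move/eqP: e; rewrite paddr_eq0 ?trPD_ge0 // => /andP [/eqP e1 _].
apply: trnorm_eq0; apply/eqP; rewrite eq_le trnorm_ge0 andbT.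
have := trPD L; rewrite e1 => h2.
by rewrite -(pmulr_rle0 _ c_gt0).
Qed.

Lemma sylv_adj (L : 'M[C]_n) : adj (sylv rho L) = sylv rho (adj L).
Proof. by rewrite /sylv adjD !adj_mul rhoH addrC. Qed.

Lemma SLD_exists (D : 'M[C]_n) : adj D = D -> exists L, is_SLD rho D L.
Proof.
move=> hD; have [L0 hL0] := sylv_surj sylv_inj (2%:R *: D).
have e : adj L0 = L0.
  apply/eqP; rewrite -subr_eq0; apply/eqP; apply: sylv_inj.
  rewrite linearB /= -sylv_adj hL0 adjZ hD (conjc_nat _ 2); exact: subrr.
by exists L0; split.
Qed.

Definition gf (A B : 'M[C]_n) := \tr (adj A *m rho *m B).

Lemma gf_conj A B : (gf A B)^* = gf B A.
Proof. by rewrite /gf conj_tr !adj_mul adjK rhoH mulmxA. Qed.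

Lemma gfBl A B D : gf (A - B) D = gf A D - gf B D.
Proof. by rewrite /gf adjB !mulmxBl linearB. Qed.
Lemma gfBr A B D : gf D (A - B) = gf D A - gf D B.
Proof. by rewrite /gf !mulmxBr linearB. Qed.
Lemma gfZl a A D : gf (a *: A) D = a^* * gf A D.
Proof. by rewrite /gf adjZ -!scalemxAl mxtraceZ. Qed.
Lemma gfZr a A D : gf D (a *: A) = a * gf D A.
Proof. by rewrite /gf -!scalemxAr mxtraceZ. Qed.

Lemma gf_ge0 A : 0 <= gf A A.
Proof. exact: trPD_ge0. Qed.

Lemma CS (X L : 'M[C]_n) : 0 < gf X X -> gf X L * (gf X L)^* <= gf X X * gf L L.
Proof.
move=> ha.
set a := gf X X; set z := gf X L; set b := gf L L.
have hY := gf_ge0 (a *: L - z *: X).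
rewrite gfBl !gfBr !gfZl !gfZr -/a -/z -/b in hY.
have ea : a^* = a by rewrite /a gf_conj.
have ez : gf L X = z^* by rewrite /z gf_conj.
rewrite ea ez in hY.
have e2 : a * (a * b) - a * (z * z^*) - (z^* * (a * z) - z^* * (z * a)) = a * (a * b - z * z^*).
  by ring.
rewrite e2 pmulr_rge0 // in hY.
by rewrite -subr_ge0.
Qed.

End Fisher.
Section QFIb.
Set Implicit Arguments. Unset Strict Implicit.
Variable R : realType.
Local Notation C := (R[i]).
Variables (n : nat) (rho : 'M[C]_n) (c : C).
Hypothesis rhoH : adj rho = rho.
Hypothesis c_gt0 : 0 < c.
Hypothesis pd : forall v : 'cV[C]_n, c * (adj v *m v) 0 0 <= (adj v *m rho *m v) 0 0.

Lemma trLL (L : 'M[C]_n) : adj L = L -> \tr (rho *m L *m L) = gf rho L L.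
Proof. by move=> hL; rewrite /gf hL mxtrace_mulC mulmxA. Qed.

Lemma qfi_bound (D X : 'M[C]_n) : adj D = D -> adj X = X -> 0 < gf rho X X ->
  `|\tr (X *m D)| ^+ 2 <= gf rho X X * Complex (QFI rho D) 0.
Proof.
move=> hD hX ha.
have [L0 [hL0 _]] := SLD_exists rhoH c_gt0 pd hD.
pose P := (fun q : R => exists L, is_SLD rho D L /\
                        Complex q 0 = \tr (rho *m L *m L)).
have ex : exists q, P q.
  have [L1 hL1] := SLD_exists rhoH c_gt0 pd hD.
  exists (complex.Re (\tr (rho *m L1 *m L1))); exists L1; split => //.
  have := ger0_Im (gf_ge0 c_gt0 pd L1); rewrite -trLL; last by case: hL1.
  by case: (\tr _) => a b /= ->.
have [L [[hL hS] hq]] := @xgetPex _ 0 P ex.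
rewrite -/(QFI rho D) in hq.
rewrite hq trLL //.
set z := gf rho X L.
have e1 : \tr (X *m D) *+ 2 = z + z^*.
  rewrite -mulr_natl -mxtraceZ scalemxAr hS mulmxDr linearD /=.
  rewrite /z gf_conj // /gf hX hL !mulmxA; congr (_ + _).
  by rewrite [RHS]mxtrace_mulC mulmxA.
have h1 : `|\tr (X *m D)| <= `|z|.
  rewrite -(ler_pMn2r (R := C) (isT : (0 < 2)%N)) -normrMn e1.
  apply: le_trans (ler_normD _ _) _; by rewrite norm_conjC mulr2n.
apply: le_trans (CS rhoH c_gt0 pd L ha).
rewrite -/z -normCK expr2; apply: ler_pM => //.
Qed.

End QFIb.
Section SeqDer.
Set Implicit Arguments. Unset Strict Implicit.
Variable R : realType.
Local Notation C := (R[i]).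
Variables (d r : nat) (K : R -> 'I_r -> 'M[C]_d) (t : R).
Hypothesis Kdiff : forall k, mx_derivable (fun s => K s k) t.

Lemma channel_mdr (F : R -> 'M[C]_d) D :
  mdr F t D -> exists D', mdr (fun s => channel (K s) (F s)) t D'.
Proof.
move=> hF; eexists; rewrite /channel.
apply: mdr_sum => k.
apply: mdr_mul; last exact: mdr_adj (mdr_derivable (Kdiff k)).
apply: mdr_mul hF; exact: mdr_derivable (Kdiff k).
Qed.

Lemma liouville_mdr :
  mdr (fun s => liouville (K s)) t (mderive (fun s => liouville (K s)) t).
Proof.
have [D hD] : exists D, mdr (fun s => liouville (K s)) t D.
  eexists; rewrite /liouville; apply: mdr_sum => k.
  apply: mdr_tens; first exact: mdr_derivable (Kdiff k).
  exact: mdr_conj (mdr_derivable (Kdiff k)).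
by rewrite (mdr_mderive hD).
Qed.

Variables (Uc rho0 : 'M[C]_d).

Lemma seq_stateS N s : seq_state K Uc rho0 N.+1 s =
  Uc *m channel (K s) (seq_state K Uc rho0 N s) *m adj Uc.
Proof. by []. Qed.

Lemma seq_mdr N : mdr (seq_state K Uc rho0 N) t (mderive (seq_state K Uc rho0 N) t).
Proof.
suff [D hD] : exists D, mdr (seq_state K Uc rho0 N) t D by rewrite (mdr_mderive hD).
elim: N => [|N [D hD]].
  by exists 0; apply: mdr_cst.
have [D' hD'] := channel_mdr hD.
eexists; apply: mdr_ext (fun s => esym (seq_stateS N s)) _ _.
  reflexivity.
apply: mdr_mul; last exact: mdr_cst.
apply: mdr_mul hD'; exact: mdr_cst.
Qed.

Definition Vmx := Uc *t map_mx (@conjc R) Uc.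

Lemma seq_vec N s : vecm (seq_state K Uc rho0 N.+1 s) =
  Vmx *m (liouville (K s) *m vecm (seq_state K Uc rho0 N s)).
Proof. by rewrite liouville_vec /Vmx Uvec. Qed.

Lemma seq_rec N :
  vecm (mderive (seq_state K Uc rho0 N.+1) t) =
  Vmx *m (mderive (fun s => liouville (K s)) t *m vecm (seq_state K Uc rho0 N t)
          + liouville (K t) *m vecm (mderive (seq_state K Uc rho0 N) t)).
Proof.
have h1 := mdr_vec (seq_mdr N.+1).
have h2 : mdr (fun s => Vmx *m (liouville (K s) *m vecm (seq_state K Uc rho0 N s))) t
   (0 *m (liouville (K t) *m vecm (seq_state K Uc rho0 N t)) +
    Vmx *m (mderive (fun s => liouville (K s)) t *m vecm (seq_state K Uc rho0 N t)
          + liouville (K t) *m vecm (mderive (seq_state K Uc rho0 N) t))).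
  apply: mdr_mul; first exact: mdr_cst.
  apply: mdr_mul; first exact: liouville_mdr.
  exact: mdr_vec (seq_mdr N).
rewrite mul0mx add0r in h2.
apply: mdr_uniq h1 _.
by apply: mdr_ext h2 => // s; rewrite seq_vec.
Qed.

End SeqDer.
Section ChanAlg.
Set Implicit Arguments. Unset Strict Implicit.
Variable R : rcfType.
Local Notation C := (R[i]).
Variables (d r : nat) (K : 'I_r -> 'M[C]_d).

Lemma channelD Y Z : channel K (Y + Z) = channel K Y + channel K Z.
Proof. by rewrite /channel -big_split; apply: eq_bigr => k _; rewrite mulmxDr mulmxDl. Qed.
Lemma channelZ a Y : channel K (a *: Y) = a *: channel K Y.
Proof. by rewrite /channel scaler_sumr; apply: eq_bigr => k _; rewrite -scalemxAr -scalemxAl. Qed.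
Lemma channel_adj Y : channel K (adj Y) = adj (channel K Y).
Proof. by rewrite /channel adj_sum; apply: eq_bigr => k _; rewrite !adj_mul adjK mulmxA. Qed.
Lemma chdD Y Z : chd K (Y + Z) = chd K Y + chd K Z.
Proof. by rewrite /chd -big_split; apply: eq_bigr => k _; rewrite mulmxDr mulmxDl. Qed.
Lemma chdZ a Y : chd K (a *: Y) = a *: chd K Y.
Proof. by rewrite /chd scaler_sumr; apply: eq_bigr => k _; rewrite -scalemxAr -scalemxAl. Qed.
Lemma chd_adj Y : chd K (adj Y) = adj (chd K Y).
Proof. by rewrite /chd adj_sum; apply: eq_bigr => k _; rewrite !adj_mul adjK mulmxA. Qed.

Variable Uc : 'M[C]_d.
Hypothesis HUc : unitary Uc.

Definition good Y := Uc *m channel K Y *m adj Uc = Y /\ chd K (channel K Y) = Y.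

Lemma good_adj Y : good Y -> good (adj Y).
Proof.
move=> [h1 h2]; split.
  have e : adj (Uc *m channel K Y *m adj Uc) = Uc *m adj (channel K Y) *m adj Uc.
    by rewrite !adj_mul adjK mulmxA.
  by rewrite channel_adj -e h1.
by rewrite channel_adj chd_adj h2.
Qed.

Lemma good_add Y Z : good Y -> good Z -> good (Y + Z).
Proof.
move=> [h1 h2] [h3 h4]; split.
  by rewrite channelD mulmxDr mulmxDl h1 h3.
by rewrite channelD chdD h2 h4.
Qed.

Lemma good_scale a Y : good Y -> good (a *: Y).
Proof.
move=> [h1 h2]; split.
  by rewrite channelZ -scalemxAr -scalemxAl h1.
by rewrite channelZ chdZ h2.
Qed.

Lemma good_E Y : good Y -> adj Uc *m Y *m Uc = channel K Y.
Proof.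
move=> [h1 _]; rewrite -{1}h1; case: HUc => u1 u2.
by rewrite !mulmxA u1 mul1mx -mulmxA u1 mulmx1.
Qed.

End ChanAlg.
Section Main.
Set Implicit Arguments. Unset Strict Implicit.
Variable R : realType.
Local Notation C := (R[i]).
Variables (d r : nat) (K : R -> 'I_r -> 'M[C]_d) (theta0 : R).
Hypothesis Kdiff : forall (theta : R) (k : 'I_r), mx_derivable (fun s => K s k) theta.
Hypothesis Hunital : forall theta : R, channel (K theta) 1%:M = 1%:M.
Variable P : 'M[C]_(d * d).
Hypothesis HPherm : adj P = P.
Hypothesis HPidem : P *m P = P.
Hypothesis HPrange : forall v : 'cV[C]_(d * d),
     P *m v = v <->
     (adj (liouville (K theta0)) *m liouville (K theta0)) *m v = v.
Variables (Uc R0 : 'M[C]_d) (lam : C).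
Hypothesis HUc : unitary Uc.
Hypothesis Hlam : lam != 0.
Hypothesis HR0 : vecm R0 != 0.
Hypothesis Heig : P *m adj (liouville (K theta0))
            *m mderive (fun s => liouville (K s)) theta0 *m P *m vecm R0
          = lam *: vecm R0.
Hypothesis Hfix : adj Uc *m R0 *m Uc = channel (K theta0) R0.

Local Notation K0 := (K theta0).
Local Notation T := (liouville (K theta0)).
Local Notation Td := (mderive (fun s => liouville (K s)) theta0).
Local Notation V := (Vmx Uc).

Lemma PR0 : P *m vecm R0 = vecm R0.
Proof.
have e : P *m (P *m adj T *m Td *m P *m vecm R0) = P *m adj T *m Td *m P *m vecm R0.
  by rewrite !mulmxA HPidem.
rewrite Heig -scalemxAr in e.
by rewrite -[LHS]scale1r -(mulVf Hlam) -scalerA e scalerA mulVf // scale1r.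
Qed.

Lemma TT_vec Y : adj T *m T *m vecm Y = vecm (chd K0 (channel K0 Y)).
Proof. by rewrite -mulmxA liouville_vec liouville_adj_vec. Qed.

Lemma goodR0 : good K0 Uc R0.
Proof.
split.
  rewrite -Hfix; case: HUc => u1 u2.
  by rewrite !mulmxA u2 mul1mx -mulmxA u2 mulmx1.
by apply: vecm_inj; rewrite -TT_vec; apply/HPrange; exact: PR0.
Qed.

Lemma good_P Y : good K0 Uc Y -> P *m vecm Y = vecm Y.
Proof. by move=> [_ h]; apply/HPrange; rewrite TT_vec h. Qed.

Lemma adjV_vec X : good K0 Uc X -> adj V *m vecm X = T *m vecm X.
Proof. by move=> g; rewrite adjUvec (good_E HUc g) liouville_vec. Qed.

Lemma good_xVT X : good K0 Uc X -> adj (vecm X) *m (V *m T) = adj (vecm X).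
Proof.
move=> g.
have e : adj (V *m T) *m vecm X = vecm X.
  by rewrite adj_mul -mulmxA adjV_vec // mulmxA TT_vec (proj2 g).
by rewrite -[LHS]adjK adj_mul adjK e.
Qed.

Lemma Td1 : Td *m vecm 1%:M = 0.
Proof.
have h1 : mdr (fun s => liouville (K s) *m vecm 1%:M) theta0
          (Td *m vecm 1%:M + T *m 0).
  apply: mdr_mul; first exact: liouville_mdr.
  exact: mdr_cst.
rewrite mulmx0 addr0 in h1.
apply: mdr_uniq h1 _.
by apply: mdr_ext (mdr_cst _ _) => // s; rewrite liouville_vec Hunital.
Qed.

Lemma key X H : good K0 Uc X -> good K0 Uc H ->
  (adj (vecm X) *m (V *m (Td *m vecm H))) 0 0 =
  (adj (vecm X) *m (P *m adj T *m Td *m P) *m vecm H) 0 0.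
Proof.
move=> gX gH.
have e1 : adj (vecm X) *m V = adj (vecm X) *m adj T.
  by rewrite -[LHS]adjK [adj (_ *m V)]adj_mul adjK adjV_vec // adj_mul.
have e2 : adj (vecm X) *m P = adj (vecm X).
  by rewrite -[LHS]adjK [adj (_ *m P)]adj_mul adjK HPherm good_P.
by rewrite !mulmxA e1 e2 -[in RHS]mulmxA good_P.
Qed.

Local Notation Mx := (P *m adj T *m Td *m P).

Lemma e00B (A B : 'M[C]_1) : (A - B) 0 0 = A 0 0 - B 0 0.
Proof. by rewrite !mxE. Qed.
Lemma e00Z a (A : 'M[C]_1) : (a *: A) 0 0 = a * A 0 0.
Proof. by rewrite !mxE. Qed.

Lemma choose_pair : exists X H, [/\ good K0 Uc X, good K0 Uc H, adj X = X, adj H = H &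
  (adj (vecm X) *m Mx *m vecm H) 0 0 != 0].
Proof.
set H1 := R0 + adj R0; set H2 := 'i *: (R0 - adj R0).
have g1 : good K0 Uc H1 by apply: good_add; [exact: goodR0 | apply: good_adj; exact: goodR0].
have g2 : good K0 Uc H2.
  apply: good_scale; apply: good_add; first exact: goodR0.
  by rewrite -scaleN1r; apply: good_scale; apply: good_adj; exact: goodR0.
have a1 : adj H1 = H1 by rewrite /H1 adjD adjK addrC.
have a2 : adj H2 = H2.
  by rewrite /H2 adjZ adjB adjK conjcE conjCi scaleNr -scalerN opprB.
set q := fun a b : 'cV[C]_(d * d) => (adj a *m Mx *m b) 0 0.
have [h11 | n11] := eqVneq (q (vecm H1) (vecm H1)) 0; last by exists H1, H1.
have [h12 | n12] := eqVneq (q (vecm H1) (vecm H2)) 0; last by exists H1, H2.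
have [h21 | n21] := eqVneq (q (vecm H2) (vecm H1)) 0; last by exists H2, H1.
have [h22 | n22] := eqVneq (q (vecm H2) (vecm H2)) 0; last by exists H2, H2.
exfalso.
have er : vecm R0 = 2^-1 *: (vecm H1 - 'i *: vecm H2).
  rewrite /H1 /H2 (vecmZ (R:=R)) !(vecmD (R:=R)) (vecmN (R:=R)) scalerA -expr2 sqrCi scaleN1r opprK.
  rewrite addrACA subrr addr0 -mulr2n -scalerMnr scalerMnl -mulr_natr mulVf ?scale1r //.
  by rewrite pnatr_eq0.
have : q (vecm R0) (vecm R0) = 0.
  rewrite /q er adjZ adjB adjZ.
  rewrite !(mulmxBl, mulmxBr, =^~ scalemxAl, =^~ scalemxAr).
  rewrite !(e00B, e00Z).
  move: h11 h12 h21 h22; rewrite /q => -> -> -> ->.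
  by rewrite !(mulr0, subr0).
rewrite /q -mulmxA Heig -scalemxAr e00Z => /eqP; rewrite mulf_eq0 (negbTE Hlam) /=.
move=> /eqP /vnorm_eq0 h0; by move: HR0; rewrite h0 eqxx.
Qed.

Hypothesis Htp : forall theta : R, \sum_(k < r) (adj (K theta k) *m K theta k) = 1%:M.

Lemma good1 : good K0 Uc 1%:M.
Proof.
split; first by rewrite Hunital mulmx1; case: HUc.
by rewrite Hunital /chd -[RHS](Htp theta0); apply: eq_bigr => k _; rewrite mulmx1.
Qed.

Lemma d_gt0 : (0 < d)%N.
Proof.
rewrite lt0n; apply/negP => /eqP d0; move: HR0; apply/negP; rewrite negbK.
apply/eqP/matrixP => i j; exfalso; have := ltn_ord i; move: (nat_of_ord i) => k.
by rewrite d0.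
Qed.

Lemma ReNat (n : nat) (z : C) : complex.Re (n%:R * z) = n%:R * complex.Re z.
Proof.
rewrite !mulr_natl; elim: n => [|n IH]; first by rewrite !mulr0n.
by rewrite !mulrS ReD IH.
Qed.

Lemma main_result : exists rho0 : 'M[C]_d, density rho0 /\
    exists c : R, 0 < c /\ exists N0 : nat, forall N : nat, (N0 <= N)%N ->
      c * (N%:R ^+ 2) <=
      QFI (seq_state K Uc rho0 N theta0)
          (mderive (seq_state K Uc rho0 N) theta0).
Proof.
have [X [H [gX gH aX aH hq]]] := choose_pair.
set eps := epsH H.
set A := 1%:M + eps *: H.
set t := \tr A.
set rho0 := t^-1 *: A.
have eps_gt0 : 0 < eps := epsH_gt0 H.
have Aii : forall k : 'I_d, 2^-1 <= A k k.
  by move=> k; apply: PD_diag.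
have t_gt0 : 0 < t.
  have : \sum_(i < d) (2^-1 : C) <= t by apply: ler_sum => i _; exact: Aii.
  apply: lt_le_trans; rewrite sumr_const card_ord pmulrn_lgt0 ?d_gt0 //.
  by rewrite invr_gt0.
have treal : t^-1^* = t^-1.
  by apply/eqP; rewrite -CrealE; apply: gtr0_real; rewrite invr_gt0.
have ereal : eps^* = eps by apply/eqP; rewrite -CrealE; apply: gtr0_real.
have aA : adj A = A by rewrite /A adjD adj1 adjZ conjcE ereal aH.
have arho : adj rho0 = rho0 by rewrite /rho0 adjZ conjcE treal aA.
have pd : forall v : 'cV[C]_d, (2 * t)^-1 * (adj v *m v) 0 0 <= (adj v *m rho0 *m v) 0 0.
  move=> v; rewrite /rho0 -scalemxAr -scalemxAl e00Z.
  rewrite invfM -mulrA mulrCA ler_wpM2l ?invr_ge0 ?(ltW t_gt0) //.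
  by rewrite mulrC; exact: PD_bound.
have c0_gt0 : 0 < (2 * t)^-1 by rewrite invr_gt0 mulr_gt0.
have dens : density rho0.
  split; last by rewrite /rho0 mxtraceZ mulVf // gt_eqF.
  move=> v; apply: le_trans (pd v); apply: mulr_ge0; [exact: ltW | exact: vnorm_ge0].
have grho : good K0 Uc rho0.
  by apply: good_scale; apply: good_add; [exact: good1 | apply: good_scale].
have fixN : forall N, seq_state K Uc rho0 N theta0 = rho0.
  elim=> [|N IH] //; by rewrite seq_stateS IH (proj1 grho).
have hermS : forall N s, adj (seq_state K Uc rho0 N s) = seq_state K Uc rho0 N s.
  elim=> [|N IH] s; first exact: arho.
  by rewrite seq_stateS !adj_mul adjK -channel_adj IH mulmxA.
have hermN : forall N, adj (mderive (seq_state K Uc rho0 N) theta0) =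
                        mderive (seq_state K Uc rho0 N) theta0.
  move=> N; apply: mdr_uniq _ (seq_mdr (Kdiff theta0) Uc rho0 N).
  by apply: mdr_ext (mdr_adj (seq_mdr (Kdiff theta0) Uc rho0 N)) => // s.
set x := vecm X.
set w0 := (adj x *m (V *m (Td *m vecm rho0))) 0 0.
have cnt : forall N, (adj x *m vecm (mderive (seq_state K Uc rho0 N) theta0)) 0 0 = N%:R * w0.
  elim=> [|N IH].
    have -> : mderive (seq_state K Uc rho0 0) theta0 = 0.
      exact: mdr_mderive (mdr_cst _ _).
    have -> : vecm (0 : 'M[C]_d) = 0 by apply/matrixP => i j; rewrite !mxE.
    by rewrite mulmx0 mxE mul0r.
  rewrite (seq_rec (Kdiff theta0) Uc rho0 N) fixN mulmxDr mulmxDr.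
  rewrite [in X in _ + X]mulmxA [in X in _ + X]mulmxA -[in X in _ + X](mulmxA (adj x)).
  rewrite (good_xVT gX) mxE IH.
  by rewrite -natr1 mulrDl mul1r addrC.
set qq := (adj x *m Mx *m vecm H) 0 0.
have w0E : w0 = t^-1 * (eps * qq).
  rewrite /w0 /rho0 /A (vecmZ (R:=R)) (vecmD (R:=R)) (vecmZ (R:=R)).
  rewrite -!scalemxAr mulmxDr Td1 add0r -!scalemxAr !e00Z.
  by rewrite key.
have w0nz : w0 != 0.
  rewrite w0E; apply: mulf_neq0; first by rewrite invr_eq0 gt_eqF.
  by apply: mulf_neq0 => //; rewrite gt_eqF.
have Xnz : X != 0.
  apply/negP => /eqP X0; move: hq; rewrite /qq /x X0.
  have -> : vecm (0 : 'M[C]_d) = 0 by apply/matrixP => i j; rewrite !mxE.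
  by rewrite adj0 !mul0mx mxE eqxx.
set a := gf rho0 X X.
have a_gt0 : 0 < a.
  apply: lt_le_trans (trPD pd X); apply: mulr_gt0 => //.
  rewrite lt_def trnorm_ge0 andbT; apply/negP => /eqP h0.
  by move: Xnz; rewrite (trnorm_eq0 h0) eqxx.
set kap := `|w0| ^+ 2 / a.
have kap_gt0 : 0 < kap by rewrite divr_gt0 // exprn_gt0 // normr_gt0.
have bound : forall N, N%:R ^+ 2 * kap <=
    Complex (QFI rho0 (mderive (seq_state K Uc rho0 N) theta0)) 0.
  move=> N.
  have := qfi_bound arho c0_gt0 pd (hermN N) aX a_gt0.
  rewrite -aX -vec_tr aX cnt normrM normr_nat exprMn.
  by move=> h; rewrite /kap mulrA ler_pdivrMr // [X in _ <= X]mulrC.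
have kIm : complex.Im kap = 0 by apply: ger0_Im; exact: ltW.
exists rho0; split => //.
exists (complex.Re kap); split.
  by move: kap_gt0; rewrite ltcE /= => /andP [_].
exists 0%N => N _.
have := bound N; rewrite fixN lecE => /andP [_].
move=> h; rewrite mulrC -natrX; rewrite -natrX ReNat /= in h; exact: h.
Qed.

End Main.

Theorem theorem2 (R : realType) (d r : nat) (K : R -> 'I_r -> 'M[R[i]]_d)
  (theta0 : R)
  (Kdiff : forall (theta : R) (k : 'I_r), mx_derivable (fun s => K s k) theta)
  (Htp : forall theta : R, \sum_(k < r) (adj (K theta k) *m K theta k) = 1%:M)
  (Hunital : forall theta : R, channel (K theta) 1%:M = 1%:M)
  (P : 'M[R[i]]_(d * d))
  (HPherm : adj P = P) (HPidem : P *m P = P)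
  (HPrange : forall v : 'cV[R[i]]_(d * d),
     P *m v = v <->
     (adj (liouville (K theta0)) *m liouville (K theta0)) *m v = v)
  (Hnz : P *m adj (liouville (K theta0))
           *m mderive (fun s => liouville (K s)) theta0 *m P != 0)
  (Hnormal :
     let M := P *m adj (liouville (K theta0))
                *m mderive (fun s => liouville (K s)) theta0 *m P in
     M *m adj M = adj M *m M)
  (Uc R0 : 'M[R[i]]_d) (lam : R[i])
  (HUc : unitary Uc)
  (Hlam : lam != 0) (HR0 : vecm R0 != 0)
  (Heig : P *m adj (liouville (K theta0))
            *m mderive (fun s => liouville (K s)) theta0 *m P *m vecm R0
          = lam *: vecm R0)
  (Hfix : adj Uc *m R0 *m Uc = channel (K theta0) R0) :
  exists rho0 : 'M[R[i]]_d, density rho0 /\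
    exists c : R, 0 < c /\ exists N0 : nat, forall N : nat, (N0 <= N)%N ->
      c * (N%:R ^+ 2) <=
      QFI (seq_state K Uc rho0 N theta0)
          (mderive (seq_state K Uc rho0 N) theta0).
Proof.
exact: (main_result Kdiff Hunital HPherm HPidem HPrange HUc Hlam HR0 Heig Hfix Htp).
Qed.
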